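(* Let $a=(a_1,\dots,a_n)$ be an inversion sequence and let $\sigma\in S_n$ be the unique permutation with $\mathrm{InvSeq}(\sigma)=a$. Then the number of cyclic parking functions $p\in\mathrm{CycPF}_n$ with displacement vector $\mathrm{disp}(p)=a$ equals the number of components of $\sigma$; in particular there is at least one such $p$.
   Context: An inversion sequence is a sequence $(a_1,\dots,a_n)$ of non-negative integers with $a_i<i$ for all $i$. For $\sigma\in S_n$ (one-line notation), $\mathrm{inv}_a(\sigma)$ is the number of $b<a$ appearing after $a$ in $\sigma$, and $\mathrm{InvSeq}(\sigma)=(\mathrm{inv}_1(\sigma),\dots,\mathrm{inv}_n(\sigma))$, a bijection from $S_n$ to inversion sequences of length $n$. A component of $\sigma$ is a contiguous block $\sigma_a\cdots\sigma_b$ with $\{\sigma_a,\dots,\sigma_b\}=\{a,\dots,b\}$, minimal for inclusion; each permutation decomposes uniquely into components. Classical parking process on $n$ spots for $p\in[n]^n$: cars $1,\dots,n$ enter in order; car $i$ parks in the first unoccupied spot $k\ge p_i$, failing if none. If all park, the outcome $\pi$ has $\pi_k$ = car in spot $k$, and $\mathrm{disp}(p)=(d_1,\dots,d_n)$ with $d_i=\pi^{-1}_i-p_i$. $\mathrm{CycPF}_n$ is the set of $p$ for which all cars park and the outcome is $i(i+1)\cdots n\,12\cdots(i-1)$ for some $i\in[n]$. *)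

(* Defs.v *)
(* Conventions: everything is 0-indexed (spots, cars and
   values of permutations live in 'I_n = {0,...,n-1}). *)
From mathcomp Require Import all_boot all_fingroup.

Set Implicit Arguments.
Unset Strict Implicit.
Unset Printing Implicit Defensive.

Local Open Scope group_scope.

(* a_i < i in 1-indexed form, i.e. a_i <= i for 0-indexed i. *)
Definition is_invseq (n : nat) (a : {ffun 'I_n -> nat}) : Prop :=
  forall i : 'I_n, a i <= i.

(* sigma is read in one-line notation: position j carries value sigma j.
   inv_v(sigma) = number of values b < v appearing after v, i.e. at a
   position j > sigma^-1 v. *)
Definition inv_at (n : nat) (sigma : {perm 'I_n}) (v : 'I_n) : nat :=
  #|[set j : 'I_n | (sigma^-1 v < j)%N && (sigma j < v)%N]|.

Definition InvSeq (n : nat) (sigma : {perm 'I_n}) : {ffun 'I_n -> nat} :=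
  [ffun v => inv_at sigma v].

Definition interval (n : nat) (x y : nat) : {set 'I_n} :=
  [set i : 'I_n | (x <= i <= y)%N].

Definition closed_block (n : nat) (sigma : {perm 'I_n}) (x y : nat) : bool :=
  (x <= y)%N && (sigma @: interval n x y == interval n x y).

(* A component is a block sigma_x ... sigma_y of the (unique) decomposition
   of sigma into consecutive closed blocks: it is closed, everything before
   it is closed (so it starts a block of the decomposition), and it is minimal,
   i.e. no shorter closed block x..k (k < y) starts at x. *)
Definition component (n : nat) (sigma : {perm 'I_n}) (x y : 'I_n) : bool :=
  [&& closed_block sigma x y,
      sigma @: [set i : 'I_n | (i < x)%N] == [set i : 'I_n | (i < x)%N] &
      [forall k : 'I_n, ((x <= k < y)%N) ==> ~~ closed_block sigma x k]].

Definition ncomponents (n : nat) (sigma : {perm 'I_n}) : nat :=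
  #|[set xy : 'I_n * 'I_n | component sigma xy.1 xy.2]|.

(* occupancy: spot k holds Some car or None *)
Definition first_free (occ : seq (option nat)) (s : nat) : option nat :=
  let k := find (fun k => (s <= k)%N && (nth None occ k == None))
                (iota 0 (size occ)) in
  if (k < size occ)%N then Some k else None.

Fixpoint park_aux (occ : seq (option nat)) (i : nat) (ps : seq nat)
  : option (seq (option nat)) :=
  match ps with
  | [::] => Some occ
  | q :: ps' =>
      match first_free occ q with
      | None => None
      | Some k => park_aux (set_nth None occ k (Some i)) i.+1 ps'
      end
  end.

(* preference p i = spot preferred by car i (0-indexed).  Result: None if
   some car fails to park, otherwise Some occ with occ`_k = Some (car in
   spot k), i.e. the outcome pi. *)
Definition park (n : nat) (p : {ffun 'I_n -> 'I_n}) : option (seq (option nat)) :=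
  park_aux (nseq n None) 0 [seq val (p i) | i <- enum 'I_n].

(* CycPF_n: all cars park and the outcome is  i (i+1) ... n 1 ... (i-1),
   i.e. (0-indexed) pi_k = (k + s) mod n for some s in {0,...,n-1}. *)
Definition cycPF (n : nat) (p : {ffun 'I_n -> 'I_n}) : bool :=
  match park p with
  | None => false
  | Some occ =>
      [exists s : 'I_n, occ == [seq Some ((k + s) %% n) | k <- iota 0 n]]
  end.

(* disp(p)_i = pi^{-1}_i - p_i (spot of car i minus its preference);
   only meaningful when all cars park (default 0 otherwise). *)
Definition disp (n : nat) (p : {ffun 'I_n -> 'I_n}) (i : 'I_n) : nat :=
  match park p with
  | None => 0
  | Some occ => index (Some (val i)) occ - p i
  end.

(* Main.v *)
Require Import Defs.
From mathcomp Require Import all_boot all_fingroup.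
From mathcomp Require Import zify.
Set Implicit Arguments. Unset Strict Implicit. Unset Printing Implicit Defensive.

Lemma find_eq (T : Type) (P : pred T) (s : seq T) x0 k :
  k < size s -> P (nth x0 s k) -> (forall j, j < k -> ~~ P (nth x0 s j)) -> find P s = k.
Proof.
move=> ks Pk Hb; case: (ltngtP (find P s) k) => // H.
- have : has P s by rewrite has_find (ltn_trans H ks).
  move/(nth_find x0) => Pf. by move: (Hb _ H); rewrite Pf.
- by move: (before_find x0 H); rewrite Pk.
Qed.

Lemma first_free_some occ q k : first_free occ q = Some k ->
  [/\ k < size occ, q <= k & nth None occ k = None].
Proof.
rewrite /first_free; case: ifP => // fs [<-].
have : has (fun k => (q <= k) && (nth None occ k == None)) (iota 0 (size occ)).
  by rewrite has_find size_iota.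
move/(nth_find 0); rewrite nth_iota // add0n => /andP[-> /eqP ->]; by split.
Qed.

Lemma first_free_eq occ q k : k < size occ -> q <= k -> nth None occ k = None ->
  (forall j, q <= j < k -> nth None occ j <> None) -> first_free occ q = Some k.
Proof.
move=> ks qk nk Hb; rewrite /first_free.
rewrite (@find_eq _ _ _ 0 k); first by rewrite ks.
- by rewrite size_iota.
- by rewrite nth_iota // add0n qk nk eqxx.
- move=> j jk; rewrite nth_iota ?add0n; last by apply: ltn_trans ks.
  apply/negP => /andP[qj /eqP]; apply: Hb; by rewrite qj jk.
Qed.

Lemma park_aux_keep occ i ps occ' : park_aux occ i ps = Some occ' ->
  forall k, nth None occ k <> None -> nth None occ' k = nth None occ k.
Proof.
elim: ps occ i => [|q ps IH] occ i /=; first by case=> ->.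
case E: (first_free occ q) => [k'|] //= H k nk.
have [_ _ nk'] := first_free_some E.
have e: nth None (set_nth None occ k' (Some i)) k = nth None occ k.
  rewrite nth_set_nth /=; case: eqP => // ek; by rewrite ek nk' in nk.
by rewrite (IH _ _ H k) e.
Qed.

Lemma mod2 x n : x < n + n -> x %% n = if x < n then x else x - n.
Proof.
move=> xn; case: (ltnP x n) => h; first by rewrite modn_small.
rewrite -{1}(subnK h) modnDr modn_small //; lia.
Qed.

Definition Tocc n s := [seq Some ((k + s) %% n) | k <- iota 0 n].
Definition occ_at n s i :=
  [seq if (k + s) %% n < i then Some ((k + s) %% n) else None | k <- iota 0 n].
Definition spot n s c := (c + n - s) %% n.

Lemma modks n k s : k < n -> s < n -> (k + s) %% n = if k + s < n then k + s else k + s - n.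
Proof. move=> kn sn; apply: mod2; lia. Qed.

Lemma spotE n s c : c < n -> s < n -> spot n s c = if s <= c then c - s else c + n - s.
Proof. move=> cn sn; rewrite /spot mod2; last lia. case: ifP; case: ifP; lia. Qed.

Lemma spot_lt n s c : c < n -> s < n -> spot n s c < n.
Proof. move=> cn sn; rewrite spotE //; case: ifP; lia. Qed.

Lemma spot_mod n s c k : c < n -> s < n -> k < n -> ((k + s) %% n == c) = (k == spot n s c).
Proof. move=> cn sn kn; rewrite spotE // modks //. case: ifP; case: ifP; lia. Qed.

Lemma nth_occ n s i k : k < n -> nth None (occ_at n s i) k =
  if (k + s) %% n < i then Some ((k + s) %% n) else None.
Proof. move=> kn; by rewrite /occ_at (nth_map 0) ?size_iota // nth_iota. Qed.

Lemma nth_T n s k : k < n -> nth None (Tocc n s) k = Some ((k + s) %% n).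
Proof. move=> kn; by rewrite /Tocc (nth_map 0) ?size_iota // nth_iota. Qed.

Lemma size_occ n s i : size (occ_at n s i) = n.
Proof. by rewrite size_map size_iota. Qed.
Lemma size_T n s : size (Tocc n s) = n.
Proof. by rewrite size_map size_iota. Qed.

Lemma occ_step n s i : s < n -> i < n ->
  set_nth None (occ_at n s i) (spot n s i) (Some i) = occ_at n s i.+1.
Proof.
move=> sn i_n; apply: (@eq_from_nth _ None).
  rewrite size_set_nth !size_occ; have := spot_lt i_n sn; lia.
rewrite size_set_nth size_occ => k; have := spot_lt i_n sn => sl kl.
have kn : k < n by lia.
rewrite nth_set_nth /= !nth_occ //.
have e := spot_mod i_n sn kn.
case E: (k == spot n s i); rewrite E in e.
  by move/eqP: e => ->; rewrite ltnSn.
move/negbT/eqP: e => ne.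
by have -> : ((k+s)%%n < i.+1) = ((k+s)%%n < i) by lia.
Qed.

Lemma index_T n s c : c < n -> s < n -> index (Some c) (Tocc n s) = spot n s c.
Proof.
move=> cn sn; have sl := spot_lt cn sn.
have -> : Some c = nth None (Tocc n s) (spot n s c).
  by rewrite nth_T //; have := spot_mod cn sn sl; rewrite eqxx => /eqP ->.
rewrite index_uniq ?size_T //.
rewrite map_inj_in_uniq ?iota_uniq // => x y; rewrite !mem_iota /= => xn yn [].
rewrite !modks; try lia. case: ifP; case: ifP; lia.
Qed.

Definition plist n (p : {ffun 'I_n -> 'I_n}) := [seq val (p i) | i <- enum 'I_n].

Lemma nth_plist n (p : {ffun 'I_n -> 'I_n}) (j : 'I_n) : nth 0 (plist p) j = p j.
Proof. by rewrite (nth_map j) ?size_enum_ord // nth_ord_enum. Qed.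

Lemma size_plist n (p : {ffun 'I_n -> 'I_n}) : size (plist p) = n.
Proof. by rewrite size_map size_enum_ord. Qed.

Lemma park_occ_gen n s (p : {ffun 'I_n -> 'I_n}) m : s < n -> m <= n ->
  park_aux (occ_at n s (n - m)) (n - m) (drop (n - m) (plist p)) = Some (Tocc n s) <->
  (forall j : 'I_n, n - m <= j -> first_free (occ_at n s j) (p j) = Some (spot n s j)).
Proof.
move=> sn; elim: m => [|m IH] mn.
- rewrite subn0 drop_oversize ?size_plist //=; split => [_ j|_].
  + by rewrite leqNgt ltn_ord.
  + congr Some; apply: (@eq_from_nth _ None); rewrite ?size_occ ?size_T // => k kn.
    by rewrite nth_occ // nth_T // ltn_pmod //; lia.
- have im : n - m.+1 < n by lia.
  have e1 : (n - m.+1).+1 = n - m by lia.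
  have IH' := IH (ltnW mn).
  rewrite (drop_nth 0) ?size_plist //= (nth_plist p (Ordinal im)) /=.
  case E: first_free => [k|]; split.
  + move=> H.
    have [kn _ nk] := first_free_some E; rewrite size_occ in kn.
    have := park_aux_keep H (k:=k); rewrite nth_set_nth /= eqxx nth_T // => /(_ ltac:(done)) [].
    move/eqP; rewrite spot_mod // => /eqP ek; subst k.
    rewrite occ_step // e1 in H; move/IH': H => H j hj.
    case: (ltngtP (n - m.+1) j) => hj2.
    * apply: H; lia.
    * lia.
    * have -> : j = Ordinal im by apply: val_inj.
      exact: E.
  + move=> H; move: (H (Ordinal im) (leqnn _)); rewrite /= E => -[->].
    rewrite occ_step // e1; apply/IH' => j hj; apply: H; lia.
  + by [].
  + move=> H; move: (H (Ordinal im) (leqnn _)); by rewrite /= E.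
Qed.

Lemma park_occ n s (p : {ffun 'I_n -> 'I_n}) : s < n ->
  park p = Some (Tocc n s) <->
  (forall j : 'I_n, first_free (occ_at n s j) (p j) = Some (spot n s j)).
Proof.
move=> sn; have := park_occ_gen p sn (leqnn n); rewrite subnn drop0.
have -> : occ_at n s 0 = nseq n None.
  apply: (@eq_from_nth _ None); rewrite ?size_occ ?size_nseq // => k kn.
  by rewrite nth_occ // nth_nseq kn.
rewrite /park -/(plist p) => ->; split => H j //; exact: H.
Qed.

Section Count.
Variables (n : nat) (a : {ffun 'I_n -> nat}).
Hypothesis Ha : is_invseq a.

Lemma psP (s c : 'I_n) : spot n s c - a c < n.
Proof. exact: leq_ltn_trans (leq_subr _ _) (spot_lt (ltn_ord c) (ltn_ord s)). Qed.

Definition ps (s : 'I_n) : {ffun 'I_n -> 'I_n} := [ffun c => Ordinal (psP s c)].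

Definition valid (s : 'I_n) := [forall c : 'I_n, (s <= c) ==> (a c + s <= c)].

Lemma a_le_spot (s c : 'I_n) : valid s -> a c <= spot n s c.
Proof.
move=> /forallP /(_ c) /implyP V; have := Ha c.
rewrite spotE ?ltn_ord //; have := ltn_ord s; case: ifP => h; first (have := V h; lia). lia. Qed.

Lemma ps_park s : valid s -> park (ps s) = Some (Tocc n s).
Proof.
move=> V; apply/park_occ => // j; have := a_le_spot j V => aj.
have sl := spot_lt (ltn_ord j) (ltn_ord s).
apply: first_free_eq; rewrite ?size_occ //=.
- by rewrite ffunE leq_subr.
- rewrite nth_occ //; have := spot_mod (ltn_ord j) (ltn_ord s) sl; rewrite eqxx.
  by move/eqP => ->; rewrite ltnn.
- move=> k; rewrite ffunE /= => /andP[k1 k2]; rewrite nth_occ; last lia.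
  have kn : k < n by lia.
  move: (ltn_ord j) (ltn_ord s) (Ha j) => jn sn' ajj.
  move/forallP: V => /(_ j) /implyP V.
  move: k1 k2 aj; rewrite modks // spotE ?ltn_ord //.
  move=> k1' k2' aj'.
  set X := (if k + s < n then _ else _); suff: X < j by move=> ->.
  rewrite /X; case: (leqP s j) => h; [rewrite h in k1' k2' aj'; have := V h | rewrite (leqNgt s j) h /= in k1' k2' aj']; case: (ltnP (k + s) n) => h2; lia.
Qed.

Definition PP := [set p : {ffun 'I_n -> 'I_n} | cycPF p && [forall i, disp p i == a i]].

Lemma ps_in s : valid s -> ps s \in PP.
Proof.
move=> V; rewrite inE /cycPF /disp ps_park //; apply/andP; split.
  by apply/existsP; exists s.
apply/forallP => i; rewrite index_T ?ltn_ord // ffunE /=.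
have := a_le_spot i V; set x := spot _ _ _; move=> h; apply/eqP; lia.
Qed.

Lemma PP_ps p : p \in PP -> exists2 s, valid s & p = ps s.
Proof.
rewrite inE /cycPF => /andP[]; case E: (park p) => [occ|] // /existsP[s /eqP Es].
subst occ; move=> /forallP D; exists s.
- apply/forallP => c; apply/implyP => sc.
  have := D c; rewrite /disp E index_T ?ltn_ord // spotE ?ltn_ord // sc => /eqP h.
  have {h}h : (c:nat) - s - p c = a c := h; lia.
- have G := proj1 (park_occ p (ltn_ord s)) E.
  apply/ffunP => c; apply: val_inj; rewrite ffunE /=.
  have [_ pc _] := first_free_some (G c).
  have := D c; rewrite /disp E index_T ?ltn_ord // => /eqP h.
  have {h}h : spot n s c - p c = a c := h.
  by rewrite -h subKn.
Qed.

Lemma ps_inj : {in [set s | valid s] &, injective ps}.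
Proof.
move=> s t; rewrite !inE => Vs Vt e.
have := ps_park Vt; rewrite -e ps_park // => -[] /(congr1 (nth None ^~ 0)).
have n0 : 0 < n by apply: leq_ltn_trans (ltn_ord s).
rewrite !nth_T // !add0n !modn_small // => -[] st; exact: val_inj.
Qed.

Lemma card_PP : #|PP| = #|[set s | valid s]|.
Proof.
suff -> : PP = ps @: [set s | valid s] by rewrite (card_in_imset ps_inj).
apply/setP => p.
apply/idP/imsetP.
- by case/PP_ps => s V ->; exists s; rewrite ?inE.
- by case=> s; rewrite inE => V ->; exact: ps_in.
Qed.

End Count.

Lemma card_lt n c : c <= n -> #|[set v : 'I_n | v < c]| = c.
Proof.
elim: c => [|c IH] cn.
  by apply/eqP; rewrite cards_eq0; apply/eqP/setP => v; rewrite !inE.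
have -> : [set v : 'I_n | v < c.+1] = Ordinal cn |: [set v : 'I_n | v < c].
  by apply/setP => v; rewrite !inE ltnS leq_eqVlt -val_eqE.
rewrite cardsU1 IH ?(ltnW cn) // inE ltnn; by rewrite add1n.
Qed.

Section Perm.
Variables (n : nat) (sigma : {perm 'I_n}).

Definition pc (x : 'I_n) :=
  sigma @: [set i : 'I_n | i < x] == [set i : 'I_n | i < x].

Lemma pcE (x : 'I_n) : pc x -> forall j : 'I_n, (sigma j < x) = (j < x).
Proof.
move/eqP => E j.
have := mem_imset [set i : 'I_n | i < x] j (@perm_inj _ sigma).
by rewrite E !inE.
Qed.

Lemma not_pc (x : 'I_n) : ~~ pc x -> exists j : 'I_n, (j < x) && (x <= sigma j).
Proof.
move=> npc; apply/existsP; apply: contraNT npc => /existsPn H.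
rewrite /pc eqEcard card_imset ?leqnn ?andbT; last exact: perm_inj.
apply/subsetP => v /imsetP[j]; rewrite !inE => jx ->.
by move: (H j); rewrite jx /= -ltnNge.
Qed.

Lemma pc_valid (x : 'I_n) : pc x -> valid (InvSeq sigma) x.
Proof.
move=> P; have E := pcE P.
apply/forallP => c; apply/implyP => xc; rewrite ffunE /inv_at.
set S := [set j : 'I_n | _].
have qx : x <= (sigma^-1)%g c.
  by rewrite leqNgt -E permKV -leqNgt.
have : #|sigma @: S| <= #|[set v : 'I_n | v < c] :\: [set v : 'I_n | v < x]|.
  apply: subset_leq_card; apply/subsetP => v /imsetP[j]; rewrite !inE => /andP[j1 j2] ->.
  by rewrite j2 andbT E -leqNgt (leq_trans qx (ltnW j1)).
rewrite card_imset; last exact: perm_inj.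
rewrite cardsDS; last by apply/subsetP => v; rewrite !inE => h; apply: leq_trans h xc.
rewrite !card_lt; [move=> h; by rewrite -(subnK xc) leq_add2r| |]; apply: ltnW; last exact: ltn_ord.
exact: leq_ltn_trans xc (ltn_ord c).
Qed.

Lemma valid_pc (x : 'I_n) : valid (InvSeq sigma) x -> pc x.
Proof.
move=> V; apply: contraTT V => /not_pc [j0 Hj0].
have [q' /andP[qx xq] qmin] : exists2 q' : 'I_n, (q' < x) && (x <= sigma q') &
   forall j : 'I_n, (j < x) && (x <= sigma j) -> q' <= j.
  by case: (@arg_minnP _ j0 (fun j : 'I_n => (j < x) && (x <= sigma j)) (fun j : 'I_n => val j) Hj0) => i Hi Hm; exists i.
apply/forallPn; exists (sigma q'); rewrite negb_imply xq /= ffunE /inv_at permK.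
set c := sigma q'.
have cn : c <= n := ltnW (ltn_ord c).
have Hall : #|[set j : 'I_n | sigma j < c]| = c.
  have -> : [set j : 'I_n | sigma j < c] = (sigma^-1)%g @: [set v : 'I_n | v < c].
    apply/setP => j; rewrite !inE; apply/idP/imsetP.
      by move=> h; exists (sigma j); rewrite ?inE ?permK.
    by case=> v; rewrite inE => h ->; rewrite permKV.
  by rewrite card_imset ?card_lt //; exact: perm_inj.
have Hlow : [set j : 'I_n | sigma j < c] :&: [set j : 'I_n | j <= q'] = [set j : 'I_n | j < q'].
  apply/setP => j; rewrite !inE; apply/idP/idP.
    case/andP => h1; rewrite leq_eqVlt => /orP[/eqP e|//].
    have e' : j = q' by apply: val_inj.
    by move: h1; rewrite e' /c ltnn.
  move=> jq; rewrite (ltnW jq) andbT.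
  case: (ltnP (sigma j) x) => h; first exact: leq_trans h xq.
  by move: (qmin j); rewrite h andbT (leq_trans jq (ltnW qx)) => /(_ isT); rewrite leqNgt jq.
have Hhigh : [set j : 'I_n | sigma j < c] :\: [set j : 'I_n | j <= q'] =
             [set j : 'I_n | (q' < j) && (sigma j < c)].
  by apply/setP => j; rewrite !inE -ltnNge andbC.
have := cardsID [set j : 'I_n | j <= q'] [set j : 'I_n | sigma j < c].
rewrite Hlow Hhigh Hall card_lt; last exact: ltnW (ltn_ord q').
lia.
Qed.

End Perm.

Lemma comp_pc n (sigma : {perm 'I_n.+1}) :
  ncomponents sigma = #|[set x | pc sigma x]|.
Proof.
rewrite /ncomponents.
set C := [set xy : 'I_n.+1 * 'I_n.+1 | component sigma xy.1 xy.2].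
have inj : {in C &, injective fst}.
  move=> [x1 y1] [x2 y2]; rewrite !inE /= => /and3P[c1 _ f1] /and3P[c2 _ f2] e.
  subst x2; congr pair.
  case: (ltngtP y1 y2) => h; last exact: val_inj.
  - move: (forallP f2 y1); rewrite h andbT (c1); by case/andP: c1 => ->.
  - move: (forallP f1 y2); rewrite h andbT (c2); by case/andP: c2 => ->.
suff -> : [set x | pc sigma x] = fst @: C by rewrite card_in_imset.
apply/setP => x; rewrite inE; apply/idP/imsetP.
- move=> P.
  have cmax : closed_block sigma x (@ord_max n).
    rewrite /closed_block -ltnS ltn_ord /= eqEcard card_imset ?leqnn ?andbT; last exact: perm_inj.
    apply/subsetP => v /imsetP[i]; rewrite !inE => /andP[xi _] ->.
    by rewrite leq_ord andbT leqNgt (pcE P) -leqNgt.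
  case: (@arg_minnP _ ord_max (fun k : 'I_n.+1 => closed_block sigma x k) (fun k : 'I_n.+1 => val k) cmax) => y cy ym.
  exists (x, y) => //; rewrite inE /component /= cy; move: P; rewrite /pc => -> /=.
  apply/forallP => k; apply/implyP => /andP[_ ky]; apply/negP => ck.
  by have := ym k ck; rewrite leqNgt ky.
- by case=> [[x' y]]; rewrite inE => /and3P[_ P _] ->.
Qed.

Theorem mainTheorem14 (n : nat) (a : {ffun 'I_n -> nat}) (sigma : {perm 'I_n}) :
  is_invseq a -> InvSeq sigma = a ->
  #|[set p : {ffun 'I_n -> 'I_n} | cycPF p && [forall i, disp p i == a i]]|
    = ncomponents sigma
  /\ (0 < n -> 0 < #|[set p : {ffun 'I_n -> 'I_n} |
                        cycPF p && [forall i, disp p i == a i]]|).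
Proof.
move=> Ha Hs; have := card_PP Ha; rewrite /PP => ->.
case: n a sigma Ha Hs => [|n] a sigma Ha Hs.
  split => //; rewrite /ncomponents.
  have E1 : forall T : finType, forall A : {set T}, #|T| = 0 -> #|A| = 0.
    by move=> T A h; apply/eqP; rewrite -leqn0 -h max_card.
  by rewrite !E1 // ?card_prod card_ord.
split.
- rewrite comp_pc; apply: eq_card => x; rewrite !inE -Hs.
  apply/idP/idP; [exact: valid_pc | exact: pc_valid].
- move=> _; apply/card_gt0P; exists ord0; rewrite inE.
  apply/forallP => c; apply/implyP => _; rewrite addn0; exact: Ha.
Qed.
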